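(* Let $(U,Y_U,\mathbf 1_U)$ and $(V,Y_V,\mathbf 1_V)$ be $\hbar$-adic nonlocal vertex algebras, and let $S$ be a $\mathbb{C}[[\hbar]]$-submodule of $U$ such that $U$ is generated by $S$. Assume there is a $U$-module structure $Y_V^U$ on $V$ such that $Y_V^U(u,z)\mathbf 1_V\in V[[z]]$ for all $u\in U$. Suppose $\psi^0:S\to V$ is a $\mathbb{C}[[\hbar]]$-module map with $Y_V^U(s,z)=Y_V(\psi^0(s),z)$ for all $s\in S$. Then there is a homomorphism of $\hbar$-adic nonlocal vertex algebras $\psi:U\to V$ with $\psi(s)=\psi^0(s)$ for all $s\in S$.
   Context: Let $\hbar$ be a formal variable. A $\mathbb{C}[[\hbar]]$-module is topologically free if it equals $W_0[[\hbar]]$ for a vector space $W_0$. For topologically free $W=W_0[[\hbar]]$ let $\mathcal{E}_\hbar(W)=\mathrm{Hom}_{\mathbb{C}[[\hbar]]}(W,W_0((z))[[\hbar]])$, and let $\pi_n$ denote reduction modulo $\hbar^n$. A sequence $(a_1(z),\dots,a_r(z))$ in $\mathcal{E}_\hbar(W)$ is $\hbar$-adically compatible if for each $n\ge1$ there is $m\ge0$ with $\prod_{i<j}(z_i-z_j)^m\pi_n(a_1(z_1))\cdots\pi_n(a_r(z_r))\in\mathrm{Hom}(W/\hbar^nW,(W/\hbar^nW)((z_1,\dots,z_r)))$. For such a pair $(a(z),b(z))$, with $k_n$ chosen so that $(z_1-z)^{k_n}\pi_n(a(z_1))\pi_n(b(z))\in \mathrm{Hom}(W/\hbar^nW,(W/\hbar^nW)((z_1,z)))$,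 $Y_{\mathcal E}(a(z),z_0)b(z)$ is the element of $\mathcal{E}_\hbar(W)[[z_0^{\pm1}]]$ whose reduction mod $\hbar^n$ is $z_0^{-k_n}\big((z_1-z)^{k_n}\pi_n(a(z_1))\pi_n(b(z))\big)|_{z_1=z+z_0}$ for all $n$. An $\hbar$-adic nonlocal vertex algebra is a topologically free $V$ with $\mathbf{1}\in V$ and $\mathbb{C}[[\hbar]]$-linear $Y(\cdot,z):V\to\mathcal{E}_\hbar(V)$ such that $Y(\mathbf 1,z)=\mathrm{id}$, $Y(v,z)\mathbf 1\in V[[z]]$, $\lim_{z\to0}Y(v,z)\mathbf 1=v$, $\{Y(u,z)\}_{u\in V}$ is $\hbar$-adically compatible and $Y_{\mathcal E}(Y(u,z),z_0)Y(v,z)=Y(Y(u,z_0)v,z)$. A $V$-module is a topologically free $W$ with $\mathbb{C}[[\hbar]]$-linear $Y_W:V\to\mathcal{E}_\hbar(W)$, $Y_W(\mathbf 1,z)=1_W$, $\{Y_W(u,z)\}$ $\hbar$-adically compatible, and $Y_{\mathcal E}(Y_W(u,z),z_0)Y_W(v,z)=Y_W(Y(u,z_0)v,z)$. A homomorphism $\psi:U\to V$ of $\hbar$-adic nonlocal vertex algebras is a $\mathbb{C}[[\hbar]]$-linear map with $\psi(\mathbf 1_U)=\mathbf 1_V$ and $\psi(Y_U(u,z)v)=Y_V(\psi(u),z)\psi(v)$. For a $\mathbb{C}[[\hbar]]$-submodule $U'$, $[U']=\{v:\hbar^nv\in U'\text{ for some }n\}$ and $\overline{U'}$ is its $\hbar$-adic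 closure. $U$ is generated by a subset $S$ if the only closed subspace $U'\ni\mathbf 1_U$ containing $S$, closed under all products $u_mv$ and with $[U']=U'$, is $U$ itself. *)

(* Defs.v *)
From mathcomp Require Import all_boot all_algebra.
From mathcomp.real_closed Require Import complex.
From mathcomp Require Import Rstruct.
From Stdlib Require Rdefinitions.

Set Implicit Arguments.
Unset Strict Implicit.
Unset Printing Implicit Defensive.

Import GRing.Theory Num.Theory.
Local Open Scope ring_scope.

Definition CC : fieldType := (Rdefinitions.R)[i].

Section Defs.
Variable W0 : lmodType CC.

(* W = W0[[hbar]] : an element is its sequence of hbar-coefficients. *)
Definition hs := nat -> W0.

(* the C[[hbar]]-action on W0[[hbar]] (a : C[[hbar]] as its coefficients) *)
Definition hsc (a : nat -> CC) (w : hs) : hs :=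
  fun j => \sum_(i < j.+1) a i *: w (j - i)%N.

Definition hadd (w w' : hs) : hs := fun j => w j + w' j.

Definition hpow (n : nat) : nat -> CC := fun i => (i == n)%:R.

(* An operator W -> W0((z))[[hbar]] (candidate element of E_hbar(W)):
   f w j p = coefficient of hbar^j z^p in f w.                               *)
Definition eop := hs -> nat -> int -> W0.

Definition in_Eh (f : eop) : Prop :=
  (forall p, forall u v j, f (hadd u v) j p = f u j p + f v j p) /\
  (forall p, forall a u j, f (hsc a u) j p = hsc a (fun i => f u i p) j) /\
  (forall w j, exists N : int, forall p, p < N -> f w j p = 0).

(* Multivariable series: coefficient of hbar^j z_1^(ps_1) ... z_r^(ps_r). *)
Definition mser := nat -> seq int -> W0.

(* the product a_1(z_1) ... a_r(z_r) applied to w *)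
Fixpoint opprod (s : seq eop) (w : hs) : mser :=
  match s with
  | [::] => fun j _ => w j
  | a :: s' => fun j ps => a (fun i => opprod s' w i (behead ps)) j (head 0 ps)
  end.

(* multiplication by (z_i - z_k) *)
Definition decr (i : nat) (ps : seq int) := set_nth 0 ps i (nth 0 ps i - 1).
Definition mulzd (i k : nat) (X : mser) : mser :=
  fun j ps => X j (decr i ps) - X j (decr k ps).

(* multiplication by prod_{i<k<r} (z_i - z_k)^m *)
Definition mulvdm (r m : nat) (X : mser) : mser :=
  foldr (fun ik Y => iter m (mulzd ik.1 ik.2) Y) X
        [seq ik <- [seq (i, k) | i <- iota 0 r, k <- iota 0 r] | (ik.1 < ik.2)%N].

(* F (a family of r-variable series indexed by w in W) lies, modulo hbar^n,
   in Hom(W/hbar^n W, (W/hbar^n W)((z_1,...,z_r))). *)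
Definition laurentm (r n : nat) (F : hs -> mser) : Prop :=
  forall w, exists N : int, forall (j : nat) (ps : seq int),
    (j < n)%N -> size ps = r -> has (fun p => p < N) ps -> F w j ps = 0.

Definition hcompatible (s : seq eop) : Prop :=
  forall n : nat, exists m : nat,
    laurentm (size s) n (fun w => mulvdm (size s) m (opprod s w)).

Definition hcompatible_fam (T : Type) (Y : T -> eop) : Prop :=
  forall us : seq T, hcompatible (map Y us).

Definition admissible (a b : eop) (n k : nat) : Prop :=
  laurentm 2 n (fun w => mulvdm 2 k (opprod [:: a; b] w)).

Definition lbound2 (n : nat) (N : int) (X : mser) : Prop :=
  forall (j : nat) (ps : seq int),
    (j < n)%N -> size ps = 2%N -> has (fun p => p < N) ps -> X j ps = 0.

Definition binc (p : int) (i : nat) : CC :=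
  (\prod_(l < i) (p - l%:Z)%:~R) / (i`!)%:R.

(* Coefficient of hbar^j z0^t z^s in z0^(-k) X(z+z0, z), where X is a
   two-variable series in W0((z1,z)) (mod hbar^n) with lower bound N;
   (z+z0)^p is expanded in nonnegative powers of z0.  Terms outside
   N <= p <= s+i-N vanish, so the sum below is the full (finite) sum.    *)
Definition subst_coef (N : int) (k : nat) (X : mser) (j : nat) (t s : int) : W0 :=
  if t + k%:Z < 0 then 0 else
  let i := absz (t + k%:Z) in
  \sum_(l < (absz (s + i%:Z - 2 * N)%R).+1)
     binc (N + l%:Z) i *: X j [:: N + l%:Z; s + i%:Z - N - l%:Z].

End Defs.

Arguments hs W0 : clear implicits.
Arguments eop W0 : clear implicits.

(* Y_E(Y_W(u,z),z0) Y_W(v,z) = Y_W(Y(u,z0)v, z), checked modulo every hbar^n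
   with any admissible k_n (all admissible choices give the same value). *)
Definition assoc_ax (V0 W0 : lmodType CC) (Y : hs V0 -> eop V0)
    (YW : hs V0 -> eop W0) : Prop :=
  forall (u v : hs V0) (n k : nat), admissible (YW u) (YW v) n k ->
  forall (w : hs W0) (N : int),
    lbound2 n N (mulvdm 2 k (opprod [:: YW u; YW v] w)) ->
  forall (j : nat) (t s : int), (j < n)%N ->
    YW (fun i => Y u v i t) w j s =
    subst_coef N k (mulvdm 2 k (opprod [:: YW u; YW v] w)) j t s.

Definition Ylinear (V0 W0 : lmodType CC) (Y : hs V0 -> eop W0) : Prop :=
  (forall u, in_Eh (Y u)) /\
  (forall u u' w j p, Y (hadd u u') w j p = Y u w j p + Y u' w j p) /\
  (forall a u w j p, Y (hsc a u) w j p = hsc a (fun i => Y u w i p) j).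

Definition is_hNVA (V0 : lmodType CC) (Y : hs V0 -> eop V0) (one : hs V0) : Prop :=
  [/\ Ylinear Y /\
      (forall v j p, Y one v j p = if p == 0 then v j else 0),
      (forall v j p, p < 0 -> Y v one j p = 0),
      (forall v j, Y v one j 0 = v j),
      hcompatible_fam Y &
      assoc_ax Y Y].

Definition is_hmodule (V0 W0 : lmodType CC) (Y : hs V0 -> eop V0) (one : hs V0)
    (YW : hs V0 -> eop W0) : Prop :=
  [/\ Ylinear YW,
      (forall w j p, YW one w j p = if p == 0 then w j else 0),
      hcompatible_fam YW &
      assoc_ax Y YW].

Definition hlinear (U0 V0 : lmodType CC) (f : hs U0 -> hs V0) : Prop :=
  (forall u u' j, f (hadd u u') j = f u j + f u' j) /\
  (forall a u j, f (hsc a u) j = hsc a (f u) j).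

Definition is_hNVA_hom (U0 V0 : lmodType CC) (YU : hs U0 -> eop U0) (oneU : hs U0)
    (YV : hs V0 -> eop V0) (oneV : hs V0) (psi : hs U0 -> hs V0) : Prop :=
  [/\ hlinear psi,
      (forall j, psi oneU j = oneV j) &
      (forall u v j p, psi (fun i => YU u v i p) j = YV (psi u) (psi v) j p)].

Definition hsubmod (U0 : lmodType CC) (P : hs U0 -> Prop) : Prop :=
  [/\ P (fun _ => 0),
      (forall u u', P u -> P u' -> P (hadd u u')) &
      (forall a u, P u -> P (hsc a u))].

Definition hclosed (U0 : lmodType CC) (P : hs U0 -> Prop) : Prop :=
  forall v, (forall n : nat, exists w, P w /\ forall j, (j < n)%N -> w j = v j) -> P v.

Definition hsaturated (U0 : lmodType CC) (P : hs U0 -> Prop) : Prop :=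
  forall v (n : nat), P (hsc (hpow n) v) -> P v.

Definition nprod (U0 : lmodType CC) (Y : hs U0 -> eop U0) (u : hs U0) (m : int)
    (v : hs U0) : hs U0 := fun j => Y u v j (- m - 1).

Definition hgenerated (U0 : lmodType CC) (Y : hs U0 -> eop U0) (one : hs U0)
    (S : hs U0 -> Prop) : Prop :=
  forall P : hs U0 -> Prop,
    hsubmod P -> hclosed P -> hsaturated P -> P one ->
    (forall s, S s -> P s) ->
    (forall u v (m : int), P u -> P v -> P (nprod Y u m v)) ->
    forall u, P u.

(* Main.v *)
Require Import Defs.
From mathcomp Require Import all_boot all_algebra.
From Stdlib Require Import FunctionalExtensionality.

Local Open Scope ring_scope.
Import GRing.Theory.

Lemma hsc_hpow (W0 : lmodType CC) (f : hs W0) n j :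
  hsc (hpow n) f j = if (n <= j)%N then f (j - n)%N else 0.
Proof.
rewrite /hsc /hpow; case: leqP => h.
- have hn : (n < j.+1)%N by rewrite ltnS.
  rewrite (bigD1 (Ordinal hn)) //= eqxx /= scale1r big1 ?addr0 //.
  move=> i hi; case: eqP => [e|_]; last by rewrite scale0r.
  by move: hi; rewrite -val_eqE /= e eqxx.
- rewrite big1 // => i _.
  have : (nat_of_ord i == n) = false.
    apply/negbTE; rewrite neq_ltn; apply/orP; left.
    exact: leq_trans (ltn_ord i) h.
  by move=> ->; rewrite scale0r.
Qed.

Lemma hsc0 (W0 : lmodType CC) (f : hs W0) :
  hsc (fun _ => 0) f = fun _ => 0.
Proof. apply: functional_extensionality => j; rewrite /hsc big1 // => i _; exact: scale0r. Qed.

Lemma zero_low (V0 W0 : lmodType CC) (Y : hs V0 -> eop W0) u w n j p :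
  Ylinear Y -> (forall i, (i < n)%N -> u i = 0) -> (j < n)%N -> Y u w j p = 0.
Proof.
move=> [_ [_ Ysc]] Hu hj.
have -> : u = hsc (hpow n) (fun i => u (i + n)%N).
  apply: functional_extensionality => i; rewrite hsc_hpow; case: leqP => h.
  - by rewrite subnK.
  - by rewrite Hu.
rewrite Ysc hsc_hpow; case: leqP => //= h.
by move: (leq_trans hj h); rewrite ltnn.
Qed.

Lemma low (V0 W0 : lmodType CC) (Y : hs V0 -> eop W0) u u' w n j p :
  Ylinear Y -> (forall i, (i < n)%N -> u i = u' i) -> (j < n)%N ->
  Y u w j p = Y u' w j p.
Proof.
move=> YL Hu hj.
have -> : u = hadd u' (fun i => u i - u' i).
  by apply: functional_extensionality => i; rewrite /hadd addrC subrK.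
have z : Y (fun i => u i - u' i) w j p = 0.
  by apply: (zero_low _ _ _ _ _ _ _ _ YL _ hj) => i hi; rewrite Hu // subrr.
by case: (YL) => [_ [Yadd _]]; rewrite Yadd z addr0.
Qed.

Theorem proposition3p8 (U0 V0 : lmodType CC)
    (YU : hs U0 -> eop U0) (oneU : hs U0)
    (YV : hs V0 -> eop V0) (oneV : hs V0)
    (S : hs U0 -> Prop) (YVU : hs U0 -> eop V0) (psi0 : hs U0 -> hs V0) :
  is_hNVA YU oneU ->
  is_hNVA YV oneV ->
  hsubmod S ->
  hgenerated YU oneU S ->
  is_hmodule YU oneU YVU ->
  (forall u j p, p < 0 -> YVU u oneV j p = 0) ->
  (forall s s' j, S s -> S s' -> psi0 (hadd s s') j = psi0 s j + psi0 s' j) ->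
  (forall a s j, S s -> psi0 (hsc a s) j = hsc a (psi0 s) j) ->
  (forall s v j p, S s -> YVU s v j p = YV (psi0 s) v j p) ->
  exists psi : hs U0 -> hs V0,
    is_hNVA_hom YU oneU YV oneV psi /\ (forall s j, S s -> psi s j = psi0 s j).
Proof.
move=> [[YUlin YU1] YUv1 YUv0 YUc YUa] [[YVlin YV1] YVv1 YVv0 YVc YVa] Ssub Sgen
  [YVUlin YVU1 YVUc YVUa] _ psi0add psi0sc YS.
pose psi := fun u (j : nat) => YVU u oneV j 0.
have YVL := YVlin; have YVUL := YVUlin.
case: YVlin => [_ [YVadd YVsc]]; case: YVUlin => [_ [YVUadd YVUsc]].
have key : forall u v t, YVU u = YV (psi u) -> YVU v = YV (psi v) ->
    YVU (fun i => YU u v i t) = YV (fun i => YV (psi u) (psi v) i t).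
  move=> u v t Hu Hv.
  apply: functional_extensionality => w; apply: functional_extensionality => j.
  apply: functional_extensionality => s.
  have [k Hk] := YVUc [:: u; v] j.+1.
  have adm : admissible (YVU u) (YVU v) j.+1 k := Hk.
  have [N HN] := adm w.
  rewrite (YVUa u v j.+1 k adm w N HN j t s (ltnSn j)).
  rewrite Hu Hv in adm HN *.
  by rewrite (YVa _ _ _ _ adm w N HN j t s (ltnSn j)).
pose P := fun u => YVU u = YV (psi u).
have psi1 : psi oneU = oneV.
  by apply: functional_extensionality => j; rewrite /psi YVU1.
have psiS : forall s, S s -> psi s = psi0 s.
  by move=> s Ss; apply: functional_extensionality => j; rewrite /psi YS // YVv0.
have PAll : forall u, P u.
  apply: Sgen.
  - split.
    + have Z : forall (W0 : lmodType CC) (Y : hs U0 -> eop W0) w j p,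
          Ylinear Y -> Y (fun _ => 0) w j p = 0.
        move=> W0 Y w j p [_ [_ Ysc]].
        by rewrite -(hsc0 _ (fun _ : nat => 0 : U0)) Ysc hsc0.
      have Z' : forall w j p, YV (fun _ => 0) w j p = 0.
        move=> w j p; case: YVL => [_ [_ Ysc]].
        by rewrite -(hsc0 _ (fun _ : nat => 0 : V0)) Ysc hsc0.
      have p0 : psi (fun _ => 0) = fun _ => 0.
        by apply: functional_extensionality => j; rewrite /psi Z.
      rewrite /P p0.
      apply: functional_extensionality => w; apply: functional_extensionality => j.
      apply: functional_extensionality => p; by rewrite Z // Z'.
    + move=> u u' Hu Hu'.
      have pa : psi (hadd u u') = hadd (psi u) (psi u').
        by apply: functional_extensionality => j; rewrite /psi YVUadd.
      rewrite /P pa.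
      apply: functional_extensionality => w; apply: functional_extensionality => j.
      apply: functional_extensionality => p; by rewrite YVUadd YVadd Hu Hu'.
    + move=> a u Hu.
      have pa : psi (hsc a u) = hsc a (psi u).
        by apply: functional_extensionality => j; rewrite /psi YVUsc.
      rewrite /P pa.
      apply: functional_extensionality => w; apply: functional_extensionality => j.
      apply: functional_extensionality => p; by rewrite YVUsc YVsc Hu.
  - move=> v Hv.
    apply: functional_extensionality => w; apply: functional_extensionality => j.
    apply: functional_extensionality => p.
    have [x [Px Hx]] := Hv j.+1.
    rewrite (low _ _ _ _ _ _ _ _ _ YVUL (fun i hi => esym (Hx i hi)) (ltnSn j)) Px.
    apply: (low _ _ _ _ _ _ _ _ _ YVL _ (ltnSn j)) => i hi.
    by rewrite /psi (low _ _ _ _ _ _ _ _ _ YVUL (fun i hi => Hx i hi) hi).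
  - move=> v n Hv.
    apply: functional_extensionality => w; apply: functional_extensionality => j.
    apply: functional_extensionality => p.
    have := congr1 (fun f => f w (j + n)%N p) Hv; rewrite /= YVUsc hsc_hpow.
    have pa : psi (hsc (hpow n) v) = hsc (hpow n) (psi v).
      by apply: functional_extensionality => i; rewrite /psi YVUsc.
    by rewrite pa YVsc hsc_hpow leq_addl addnK.
  - rewrite /P psi1.
    apply: functional_extensionality => w; apply: functional_extensionality => j.
    apply: functional_extensionality => p; by rewrite YVU1 YV1.
  - move=> s Ss; rewrite /P psiS //.
    apply: functional_extensionality => w; apply: functional_extensionality => j.
    apply: functional_extensionality => p; by rewrite YS.
  - move=> u v m Pu Pv; rewrite /P /nprod (key u v _ Pu Pv); congr YV.
    by apply: functional_extensionality => j; rewrite /psi (key u v _ Pu Pv) YVv0.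
exists psi; split; last by move=> s j Ss; rewrite psiS.
split.
- by split => *; rewrite /psi ?YVUadd ?YVUsc.
- by move=> j; rewrite psi1.
- by move=> u v j p; rewrite /psi (key u v p (PAll u) (PAll v)) YVv0.
Qed.
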